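(* Let $H^2\times H^2$ carry the product metric $\rho(\mathsf z,\mathsf w)=\sqrt{d_H(z_1,w_1)^2+d_H(z_2,w_2)^2}$ and for $\mathsf z,\mathsf w$ let $E(\mathsf z,\mathsf w)=\{\mathsf x:\rho(\mathsf x,\mathsf z)=\rho(\mathsf x,\mathsf w)\}$. Let $\gamma=(g_1,g_2)$, acting by $(z_1,z_2)\mapsto(g_1(z_1),g_2(z_2))$, where $g_1,g_2\in\mathrm{PSL}(2,\mathbb R)$ are both hyperbolic isometries of $H^2$. Let $\mathsf z=(z_1,z_2)$ where $z_i$ lies on the invariant axis of $g_i$ for $i=1,2$. Then $E(\mathsf z,\gamma(\mathsf z))$ and $E(\mathsf z,\gamma^{-1}(\mathsf z))$ are disjoint. In particular, the Dirichlet domain for the cyclic group $\langle\gamma\rangle$ with basepoint $\mathsf z$ is two-faced, i.e. it equals the intersection of the two closed half-spaces containing $\mathsf z$ bounded by $E(\mathsf z,\gamma(\mathsf z))$ and $E(\mathsf z,\gamma^{-1}(\mathsf z))$.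
   Context: A hyperbolic isometry of $H^2$ fixes exactly two ideal boundary points; its invariant axis is the geodesic joining them. The Dirichlet domain for a group $G$ of isometries with basepoint $p$ is $\{q:\rho(p,q)\le\rho(p,g(q))\text{ for all } g\in G\setminus\{\mathrm{id}\}\}$, i.e. the intersection over $g\neq \mathrm{id}$ of the closed half-spaces containing $p$ bounded by $E(p,g(p))$. *)

(* Defs.v *)
(* concrete reals R. Upper half-plane model of H^2. *)
From Stdlib Require Import Reals Lra ZArith.
Open Scope R_scope.

Definition pt := (R * R)%type.
Definition inH (p : pt) : Prop := 0 < snd p.

Definition arcosh (t : R) : R := ln (t + sqrt (t ^ 2 - 1)).

Definition dH (p q : pt) : R :=
  arcosh (1 + ((fst p - fst q) ^ 2 + (snd p - snd q) ^ 2)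
               / (2 * snd p * snd q)).

(* A 2x2 real matrix (a b; c d); elements of PSL(2,R) are represented by
   matrices of determinant 1 (the action does not depend on the sign). *)
Record mat := Mat { ma : R; mb : R; mc : R; md : R }.
Definition det (g : mat) : R := ma g * md g - mb g * mc g.
Definition inSL2 (g : mat) : Prop := det g = 1.

Definition minv (g : mat) : mat := Mat (md g) (- mb g) (- mc g) (ma g).

(* Moebius action z |-> (a z + b)/(c z + d) on the upper half-plane,
   written in real coordinates z = x + i y. *)
Definition mob (g : mat) (p : pt) : pt :=
  let x := fst p in let y := snd p in
  let den := (mc g * x + md g) ^ 2 + (mc g * y) ^ 2 in
  (((ma g * x + mb g) * (mc g * x + md g) + ma g * mc g * y ^ 2) / den,
   det g * y / den).

Inductive ideal := Inf | Fin (x : R).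

Definition ideal_act (g : mat) (p : ideal) : ideal :=
  match p with
  | Inf => if Req_EM_T (mc g) 0 then Inf else Fin (ma g / mc g)
  | Fin x => if Req_EM_T (mc g * x + md g) 0 then Inf
             else Fin ((ma g * x + mb g) / (mc g * x + md g))
  end.

Definition fixes_ideal (g : mat) (p : ideal) : Prop := ideal_act g p = p.

Definition hyperbolic (g : mat) : Prop := Rabs (ma g + md g) > 2.

Definition on_geodesic (p q : ideal) (z : pt) : Prop :=
  inH z /\
  match p, q with
  | Fin x1, Fin x2 =>
      (fst z - (x1 + x2) / 2) ^ 2 + (snd z) ^ 2 = ((x1 - x2) / 2) ^ 2
  | Fin x1, Inf | Inf, Fin x1 => fst z = x1
  | Inf, Inf => False
  end.

Definition on_axis (g : mat) (z : pt) : Prop :=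
  exists p q, p <> q /\ fixes_ideal g p /\ fixes_ideal g q /\ on_geodesic p q z.

Definition pt2 := (pt * pt)%type.
Definition inH2 (z : pt2) : Prop := inH (fst z) /\ inH (snd z).

Definition rho (z w : pt2) : R :=
  sqrt (dH (fst z) (fst w) ^ 2 + dH (snd z) (snd w) ^ 2).

Definition bisector (z w : pt2) (x : pt2) : Prop :=
  inH2 x /\ rho x z = rho x w.

Definition halfspace (z w : pt2) (x : pt2) : Prop :=
  inH2 x /\ rho x z <= rho x w.

Definition act2 (g1 g2 : mat) (z : pt2) : pt2 :=
  (mob g1 (fst z), mob g2 (snd z)).

Definition act2_pow (g1 g2 : mat) (n : Z) (z : pt2) : pt2 :=
  if Z.leb 0 n then Nat.iter (Z.to_nat n) (act2 g1 g2) z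
  else Nat.iter (Z.to_nat (- n)) (act2 (minv g1) (minv g2)) z.

Definition dirichlet_cyclic (g1 g2 : mat) (p : pt2) (q : pt2) : Prop :=
  inH2 q /\
  forall n : Z,
    (exists w, inH2 w /\ act2_pow g1 g2 n w <> w) ->
    rho p q <= rho p (act2_pow g1 g2 n q).

(* Main.v *)
Require Import Defs.
From Stdlib Require Import Reals Lra Psatz Field ZArith.
Open Scope R_scope.

Lemma exp_ge1 x : 0 <= x -> 1 <= exp x.
Proof. intros. pose proof (exp_ineq1_le x). lra. Qed.

Lemma cosh_exp x : cosh x = (exp x + / exp x)/2.
Proof. unfold cosh. rewrite exp_Ropp. reflexivity. Qed.

Lemma cosh_lt s t : 0 <= s -> s < t -> cosh s < cosh t.
Proof.
  intros Hs Hst. rewrite !cosh_exp.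
  pose proof (exp_ge1 s Hs). pose proof (exp_increasing s t Hst).
  set (u := exp s) in *. set (v := exp t) in *.
  assert (0 < u) by lra. assert (0 < v) by lra.
  assert (Hd : (v + / v)/2 - (u + /u)/2 = (v - u) * (u*v - 1) / (2*u*v)) by (field; lra).
  assert (0 < (v - u) * (u*v - 1) / (2*u*v)).
  { apply Rdiv_lt_0_compat. apply Rmult_lt_0_compat; nra. nra. }
  lra.
Qed.

Lemma cosh_le s t : 0 <= s -> s <= t -> cosh s <= cosh t.
Proof. intros. destruct (Req_dec s t). subst; lra. left; apply cosh_lt; lra. Qed.

Lemma arcosh_ge0 t : 1 <= t -> 0 <= arcosh t.
Proof.
  intros. unfold arcosh. rewrite <- ln_1.
  pose proof (sqrt_pos (t^2-1)).
  destruct (Req_dec (t + sqrt (t^2-1)) 1) as [E|E]. rewrite E; lra.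
  left. apply ln_increasing; lra.
Qed.

Lemma cosh_arcosh t : 1 <= t -> cosh (arcosh t) = t.
Proof.
  intros. rewrite cosh_exp. unfold arcosh.
  pose proof (sqrt_pos (t^2-1)).
  rewrite exp_ln by lra.
  assert (Hs : sqrt (t^2-1) * sqrt (t^2-1) = t^2-1) by (apply sqrt_sqrt; nra).
  set (s := sqrt (t^2-1)) in *.
  assert (Hi : / (t + s) = t - s).
  { apply Rmult_eq_reg_l with (t+s); [rewrite Rinv_r; nra | lra]. }
  rewrite Hi. lra.
Qed.

Lemma exp_half b : exp b = exp (b/2) * exp (b/2).
Proof. rewrite <- exp_plus. f_equal. field. Qed.

Lemma key_cosh a b c C : 0 <= a -> 0 <= b -> 0 <= c -> 1 < C ->
  cosh b + cosh c = 2*C*cosh a ->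
  cosh b * cosh c >= cosh a ^2 + C^2 - 1 ->
  2*a^2 < b^2 + c^2.
Proof.
  intros Ha Hb Hc HC H1 H2.
  assert (Hca : 1 <= cosh a) by (rewrite <- cosh_0; apply cosh_le; lra).
  destruct (Req_dec b c) as [E|E].
  - subst c. assert (cosh a < cosh b) by nra.
    assert (a < b). { destruct (Rle_lt_dec b a); auto. pose proof (cosh_le b a Hb r). lra. }
    nra.
  - assert (Hap : a <= (b+c)/2).
    { destruct (Rle_lt_dec a ((b+c)/2)) as [r|r]; auto. exfalso.
      pose proof (cosh_lt ((b+c)/2) a ltac:(lra) r) as Hlt.
      rewrite !cosh_exp in *.
      rewrite (exp_half b), (exp_half c) in *.
      assert (Ep : exp ((b+c)/2) = exp (b/2) * exp (c/2)).
      { rewrite <- exp_plus. f_equal. field. }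
      rewrite Ep in Hlt.
      pose proof (exp_ge1 (b/2) ltac:(lra)). pose proof (exp_ge1 (c/2) ltac:(lra)).
      set (u := exp (b/2)) in *. set (w := exp (c/2)) in *.
      set (K := (exp a + / exp a)/2) in *.
      set (cp := (u*w + /(u*w))/2) in *.
      set (cq := (u/w + w/u)/2).
      assert (Hs : (u*u + /(u*u))/2 + (w*w + /(w*w))/2 = 2*cp*cq) by (unfold cp, cq; field; lra).
      assert (Hp : (u*u + /(u*u))/2 * ((w*w + /(w*w))/2) = cp^2 + cq^2 - 1) by (unfold cp, cq; field; lra).
      assert (Hqp : cq <= cp).
      { assert (cp - cq = (u - /u)*(w - /w)/2) by (unfold cp, cq; field; lra).
        assert (/u <= 1). { rewrite <- Rinv_1. apply Rinv_le_contravar; lra. }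
        assert (/w <= 1). { rewrite <- Rinv_1. apply Rinv_le_contravar; lra. }
        assert (0 <= (u - /u)*(w - /w)) by (apply Rmult_le_pos; lra). lra. }
      assert (Hcq : 1 <= cq).
      { assert (cq - 1 = (u - w)^2/(2*u*w)) by (unfold cq; field; lra).
        assert (0 <= (u-w)^2/(2*u*w)). { unfold Rdiv. apply Rmult_le_pos. apply pow2_ge_0. left. apply Rinv_0_lt_compat. apply Rmult_lt_0_compat; lra. }
        lra. }
      rewrite Hs in H1. rewrite Hp in H2.
      (* cp*cq = C*K, cp^2+cq^2 >= K^2+C^2, cq <= cp < K *)
      assert (HK : K^2*(cp^2+cq^2) - K^4 - cp^2*cq^2 >= 0).
      { assert (cp*cq = C*K) by lra.
        assert (K^2*(cp^2+cq^2) - K^4 - cp^2*cq^2 = K^2*(cp^2+cq^2 - K^2 - C^2)).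
        { replace (cp^2*cq^2) with ((cp*cq)^2) by ring. rewrite H3. ring. }
        rewrite H4. apply Rle_ge. apply Rmult_le_pos. nra. lra. }
      assert (K^2*(cp^2+cq^2) - K^4 - cp^2*cq^2 = -((K^2-cp^2)*(K^2-cq^2))) by ring.
      assert (0 < (K^2-cp^2)*(K^2-cq^2)). { apply Rmult_lt_0_compat; nra. }
      lra. }
    assert (0 < (b-c)^2). { assert (b - c <> 0) by lra. nra. }
    nra.
Qed.

Lemma key_num A y1 y2 C : 1 <= A -> 1 <= y1 -> 1 <= y2 -> 1 < C ->
  y1 + y2 = 2*C*A -> y1*y2 >= A^2 + C^2 - 1 ->
  2*(arcosh A)^2 < (arcosh y1)^2 + (arcosh y2)^2.
Proof.
  intros. apply (key_cosh _ _ _ C); try apply arcosh_ge0; auto.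
  rewrite !cosh_arcosh; auto. rewrite !cosh_arcosh; auto.
Qed.

Definition DHc (p q : pt) : R :=
  1 + ((fst p - fst q) ^ 2 + (snd p - snd q) ^ 2) / (2 * snd p * snd q).
Lemma dH_Dx p q : dH p q = arcosh (DHc p q). Proof. reflexivity. Qed.

Definition AX (g : mat) (p : pt) : Prop :=
  mc g * (fst p ^ 2 + snd p ^ 2) + (md g - ma g) * fst p - mb g = 0.

Ltac simplg := unfold mob, minv, det, inH, DHc, AX in *; cbn zeta beta iota delta [fst snd ma mb mc md] in *.

Lemma sq_pos z : z <> 0 -> 0 < z^2.
Proof. intros. pose proof (Rsqr_pos_lt z H). unfold Rsqr in H0. nra. Qed.

Lemma den_pos a b c d x y : a*d - b*c = 1 -> 0 < y -> 0 < (c*x+d)^2 + (c*y)^2.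
Proof.
  intros H Hy. destruct (Req_dec c 0) as [E|E].
  - subst. assert (d <> 0) by (intro; subst; lra).
    pose proof (sq_pos d H0). nra.
  - assert (c*y <> 0) by (apply Rmult_integral_contrapositive; split; lra).
    pose proof (sq_pos _ H0). pose proof (pow2_ge_0 (c*x+d)). lra.
Qed.

Lemma mob_inH g p : det g = 1 -> inH p -> inH (mob g p).
Proof.
  destruct g as [a b c d], p as [x y]. simplg. intros H Hy.
  rewrite H. pose proof (den_pos a b c d x y H Hy).
  unfold Rdiv. apply Rmult_lt_0_compat. lra. apply Rinv_0_lt_compat; lra.
Qed.

Lemma D_ge1 p q : inH p -> inH q -> 1 <= DHc p q.
Proof.
  destruct p as [x y], q as [x' y']. simplg. intros.
  assert (0 <= ((x - x') ^ 2 + (y - y') ^ 2) / (2 * y * y')).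
  { unfold Rdiv. apply Rmult_le_pos. pose proof (pow2_ge_0 (x-x')). pose proof (pow2_ge_0 (y-y')). lra.
    left. apply Rinv_0_lt_compat. nra. }
  lra.
Qed.

Lemma D_iso g p q : det g = 1 -> inH p -> inH q -> DHc (mob g p) (mob g q) = DHc p q.
Proof.
  destruct g as [a b c d], p as [x y], q as [x' y']. simplg. intros H Hy Hy'.
  pose proof (den_pos a b c d x y H Hy). pose proof (den_pos a b c d x' y' H Hy').
  field. repeat split; lra.
Qed.

Lemma mob_inv g p : det g = 1 -> inH p -> mob (minv g) (mob g p) = p.
Proof.
  destruct g as [a b c d], p as [x y]. simplg. intros H Hy.
  pose proof (den_pos a b c d x y H Hy).
  f_equal; field; split; try lra;
  match goal with |- ?E <> 0 =>
    replace E with ((a*d-b*c)^2*((c*x+d)^2+(c*y)^2)) by ring end;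
  rewrite H; lra.
Qed.

Lemma det_minv g : det (minv g) = det g.
Proof. destruct g; unfold det, minv; cbn. ring. Qed.

Lemma mob_minv_minv g p : mob (minv (minv g)) p = mob g p.
Proof.
  destruct g as [a b c d], p as [x y]. unfold mob, minv, det; cbn [fst snd ma mb mc md].
  rewrite !Ropp_involutive. reflexivity.
Qed.

Lemma mob_inv' g p : det g = 1 -> inH p -> mob g (mob (minv g) p) = p.
Proof.
  intros. rewrite <- (mob_minv_minv g) at 1. apply mob_inv; auto. rewrite det_minv; auto.
Qed.


Lemma axis_param a b c d p r : a*d-b*c = 1 -> 0 < r ->
  c*(p^2+r^2)+(d-a)*p - b = 0 ->
  a - c*p <> 0 /\ d = (1 + c^2*(p^2+r^2) - a*c*p)/(a - c*p) /\
  b = c*(p^2+r^2)+(d-a)*p.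
Proof.
  intros H Hr HA.
  assert (Hb : b = c*(p^2+r^2)+(d-a)*p) by lra.
  assert (Hd : d*(a - c*p) = 1 + c^2*(p^2+r^2) - a*c*p) by (rewrite Hb in H; nra).
  assert (Hn : a - c*p <> 0).
  { intro E. rewrite E in Hd. assert (0 <= (c*r)^2) by apply pow2_ge_0. nra. }
  split; auto. split; auto. apply (Rmult_eq_reg_r (a - c*p)); auto.
  rewrite Hd. field. auto.
Qed.


Lemma side1 a c p r : a - c*p <> 0 ->
  (c * p * (a - c * p) + (1 + c ^ 2 * (p ^ 2 + r ^ 2) - a * c * p)) ^ 2 +
  (c * r * (a - c * p)) ^ 2 <> 0.
Proof.
  intros. replace (c * p * (a - c * p) + (1 + c ^ 2 * (p ^ 2 + r ^ 2) - a * c * p))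
    with (1 + (c*r)^2) by ring.
  pose proof (pow2_ge_0 (c*r)). pose proof (pow2_ge_0 (c * r * (a - c * p))). nra.
Qed.

Lemma side2 a c p r : a - c*p <> 0 -> (- c * p + a) ^ 2 + (- c * r) ^ 2 <> 0.
Proof.
  intros. replace (- c * p + a) with (a - c*p) by ring.
  pose proof (sq_pos _ H). pose proof (pow2_ge_0 (- c * r)). lra.
Qed.

Ltac sidec := repeat split; try lra; try (apply side1; assumption); try (apply side2; assumption).

Lemma AX_mob g w : det g = 1 -> inH w -> AX g w -> AX g (mob g w) /\ AX g (mob (minv g) w).
Proof.
  destruct g as [a b c d], w as [p r]. intros H Hr HA.
  pose proof (mob_inH _ _ H Hr) as H1.
  assert (H2 : inH (mob (minv (Mat a b c d)) (p,r))) by (apply mob_inH; auto; rewrite det_minv; auto).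
  simplg.
  destruct (axis_param a b c d p r H Hr HA) as (Hn & Hd & Hb).
  subst b. subst d. split; field; sidec.
Qed.

Lemma hyp_sq g : hyperbolic g -> 4 < (ma g + md g)^2.
Proof. unfold hyperbolic, Rabs. destruct (Rcase_abs _); intros; nra. Qed.

Lemma coord_convex g w x : det g = 1 -> hyperbolic g -> AX g w -> inH w -> inH x ->
  2*(dH x w)^2 < (dH x (mob g w))^2 + (dH x (mob (minv g) w))^2.
Proof.
  intros H Hh HA Hw Hx. rewrite !dH_Dx.
  pose proof (hyp_sq g Hh) as Hs.
  assert (Hgw : inH (mob g w)) by (apply mob_inH; auto).
  assert (Hhw : inH (mob (minv g) w)) by (apply mob_inH; auto; rewrite det_minv; auto).
  apply key_num with (C := ((ma g + md g)^2 - 2)/2).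
  - apply D_ge1; auto.
  - apply D_ge1; auto.
  - apply D_ge1; auto.
  - lra.
  - clear Hgw Hhw Hs Hh.
    destruct g as [a b c d], w as [p r], x as [u v]. simplg.
    destruct (axis_param a b c d p r H Hw HA) as (Hn & Hd & Hb).
    subst b. subst d. field. sidec.
  - assert (E : DHc x (mob g w) * DHc x (mob (minv g) w) - DHc x w ^2 - (((ma g + md g)^2 - 2)/2)^2 + 1
       = (ma g + md g)^2 * (mc g*(fst x^2+snd x^2)+(md g-ma g)*fst x-mb g)^2/(4*snd x^2)).
    { clear Hgw Hhw Hs Hh.
      destruct g as [a b c d], w as [p r], x as [u v]. simplg.
      destruct (axis_param a b c d p r H Hw HA) as (Hn & Hd & Hb).
      subst b. subst d. field. sidec. }
    assert (0 <= (ma g + md g)^2 * (mc g*(fst x^2+snd x^2)+(md g-ma g)*fst x-mb g)^2/(4*snd x^2)).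
    { unfold Rdiv. apply Rmult_le_pos. apply Rmult_le_pos; apply pow2_ge_0.
      left. apply Rinv_0_lt_compat. unfold inH in Hx. nra. }
    lra.
Qed.

Lemma moves g w : det g = 1 -> hyperbolic g -> AX g w -> inH w -> mob g w <> w.
Proof.
  intros H Hh HA Hw E.
  assert (E2 : DHc w (mob g w) = ((ma g + md g)^2 - 2)/2).
  { clear E Hh. destruct g as [a b c d], w as [p r]. simplg.
    destruct (axis_param a b c d p r H Hw HA) as (Hn & Hd & Hb).
    subst b. subst d. field. sidec. }
  rewrite E in E2. unfold DHc in E2. pose proof (hyp_sq g Hh).
  replace ((fst w - fst w) ^ 2 + (snd w - snd w) ^ 2) with 0 in E2 by ring.
  unfold Rdiv in E2. rewrite Rmult_0_l in E2. lra.
Qed.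

Lemma fix_fin g x : fixes_ideal g (Fin x) -> mc g * x^2 + (md g - ma g)*x - mb g = 0.
Proof.
  unfold fixes_ideal, ideal_act. destruct (Req_EM_T _ _) as [E|E]; intro H; [discriminate|].
  injection H as H. 
  assert (ma g * x + mb g = x * (mc g * x + md g)).
  { rewrite <- H at 2. field. auto. }
  nra.
Qed.

Lemma fix_inf g : fixes_ideal g Inf -> mc g = 0.
Proof.
  unfold fixes_ideal, ideal_act. destruct (Req_EM_T _ _) as [E|E]; intro H; [auto|discriminate].
Qed.

Lemma on_axis_AX g z : det g = 1 -> hyperbolic g -> on_axis g z -> inH z /\ AX g z.
Proof.
  intros H Hh (P & Q & Hne & HP & HQ & Hz & Hg). split; auto.
  pose proof (hyp_sq g Hh) as Hs. unfold AX.
  destruct P as [|x1], Q as [|x2]; try contradiction.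
  - apply fix_inf in HP. apply fix_fin in HQ. rewrite Hg, HP. rewrite HP in HQ. lra.
  - apply fix_fin in HP. apply fix_inf in HQ. rewrite Hg, HQ. rewrite HQ in HP. lra.
  - apply fix_fin in HP. apply fix_fin in HQ.
    assert (Hx : x1 <> x2) by (intro; subst; apply Hne; reflexivity).
    assert (Hsum : mc g * (x1 + x2) + (md g - ma g) = 0).
    { assert ((x1 - x2) * (mc g * (x1 + x2) + (md g - ma g)) = 0) by nra.
      apply Rmult_integral in H0. destruct H0; auto. lra. }
    destruct (Req_dec (mc g) 0) as [Ec|Ec].
    + exfalso. rewrite Ec in Hsum, HP. unfold det in H. rewrite Ec in H.
      assert (md g = ma g) by lra. rewrite H0 in HP, H, Hs.
      assert (mb g = 0) by (replace (mb g) with (-(0 * x1 ^ 2 + (ma g - ma g) * x1 - mb g)) by ring; lra).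
      rewrite H1 in H. nra.
    + assert (Hb : mb g = - mc g * x1 * x2) by nra.
      assert (Hc : fst z ^ 2 + snd z ^ 2 - (x1 + x2) * fst z + x1 * x2 = 0) by nra.
      rewrite Hb. replace (md g - ma g) with (- mc g * (x1 + x2)) by lra.
      replace (mc g * (fst z ^ 2 + snd z ^ 2) + - mc g * (x1 + x2) * fst z - - mc g * x1 * x2)
        with (mc g * (fst z ^ 2 + snd z ^ 2 - (x1 + x2) * fst z + x1 * x2)) by ring.
      rewrite Hc. ring.
Qed.

Definition F (q w : pt2) : R := dH (fst q) (fst w) ^ 2 + dH (snd q) (snd w) ^ 2.

Lemma F_ge0 q w : 0 <= F q w.
Proof. unfold F. pose proof (pow2_ge_0 (dH (fst q) (fst w))). pose proof (pow2_ge_0 (dH (snd q) (snd w))). lra. Qed.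

Lemma rho_F q w : rho q w = sqrt (F q w). Proof. reflexivity. Qed.

Lemma rho_le a b c d : F a b <= F c d -> rho a b <= rho c d.
Proof. intros. rewrite !rho_F. apply sqrt_le_1_alt; auto. Qed.

Lemma rho_le_inv a b c d : rho a b <= rho c d -> F a b <= F c d.
Proof. rewrite !rho_F. intros. apply sqrt_le_0; auto; apply F_ge0. Qed.

Lemma rho_eq_inv a b c d : rho a b = rho c d -> F a b = F c d.
Proof. rewrite !rho_F. intros. apply sqrt_inj; auto; apply F_ge0. Qed.

Lemma dH_sym p q : dH p q = dH q p.
Proof. rewrite !dH_Dx. unfold DHc.
  replace ((fst q - fst p) ^ 2 + (snd q - snd p) ^ 2) with ((fst p - fst q) ^ 2 + (snd p - snd q) ^ 2) by ring.
  replace (2 * snd q * snd p) with (2 * snd p * snd q) by ring. reflexivity. Qed.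

Lemma rho_sym u v : rho u v = rho v u.
Proof. unfold rho. rewrite (dH_sym (fst u)), (dH_sym (snd u)). reflexivity. Qed.

Lemma act2_inH2 g1 g2 u : det g1 = 1 -> det g2 = 1 -> inH2 u -> inH2 (act2 g1 g2 u).
Proof. intros H1 H2 [Ha Hb]. split; cbn; apply mob_inH; auto. Qed.

Lemma act2_iso g1 g2 u v : det g1 = 1 -> det g2 = 1 -> inH2 u -> inH2 v ->
  rho (act2 g1 g2 u) (act2 g1 g2 v) = rho u v.
Proof.
  intros H1 H2 [Ha Hb] [Hc Hd]. unfold rho, act2; cbn [fst snd].
  rewrite !dH_Dx. rewrite !D_iso; auto.
Qed.

Lemma act2_inv g1 g2 u : det g1 = 1 -> det g2 = 1 -> inH2 u ->
  act2 (minv g1) (minv g2) (act2 g1 g2 u) = u.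
Proof.
  intros H1 H2 [Ha Hb]. unfold act2; cbn [fst snd]. rewrite !mob_inv; auto. destruct u; reflexivity.
Qed.

Lemma act2_inv' g1 g2 u : det g1 = 1 -> det g2 = 1 -> inH2 u ->
  act2 g1 g2 (act2 (minv g1) (minv g2) u) = u.
Proof.
  intros H1 H2 [Ha Hb]. unfold act2; cbn [fst snd]. rewrite !mob_inv'; auto. destruct u; reflexivity.
Qed.

Lemma transfer (A B : pt2 -> pt2) :
  (forall u, inH2 u -> inH2 (A u)) -> (forall u, inH2 u -> inH2 (B u)) ->
  (forall u v, inH2 u -> inH2 v -> rho u (A v) = rho (B u) v) ->
  forall n u v, inH2 u -> inH2 v -> rho u (Nat.iter n A v) = rho (Nat.iter n B u) v.
Proof.
  intros HA HB HT n. induction n as [|n IH]; intros u v Hu Hv. reflexivity.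
  rewrite Nat.iter_succ, Nat.iter_succ_r.
  assert (Hi : inH2 (Nat.iter n A v)).
  { clear IH. induction n; cbn; auto. }
  rewrite HT; auto.
Qed.

Lemma rho_G g1 g2 u v : det g1 = 1 -> det g2 = 1 -> inH2 u -> inH2 v ->
  rho u (act2 g1 g2 v) = rho (act2 (minv g1) (minv g2) u) v.
Proof.
  intros. rewrite <- (act2_iso (minv g1) (minv g2)); try rewrite det_minv; auto.
  rewrite act2_inv; auto. apply act2_inH2; auto.
Qed.

Lemma rho_Gi g1 g2 u v : det g1 = 1 -> det g2 = 1 -> inH2 u -> inH2 v ->
  rho u (act2 (minv g1) (minv g2) v) = rho (act2 g1 g2 u) v.
Proof.
  intros. rewrite <- (act2_iso g1 g2); auto.
  rewrite act2_inv'; auto. apply act2_inH2; try rewrite det_minv; auto.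
Qed.

Definition P2 g1 g2 (w : pt2) := inH2 w /\ AX g1 (fst w) /\ AX g2 (snd w).

Lemma side g1 g2 z q : det g1 = 1 -> det g2 = 1 -> hyperbolic g1 -> hyperbolic g2 ->
  P2 g1 g2 z -> inH2 q -> F q z <= F q (act2 g1 g2 z) ->
  forall n, F q z <= F q (Nat.iter n (act2 g1 g2) z).
Proof.
  intros H1 H2 Hh1 Hh2 Hz Hq H0.
  assert (HP : forall n, P2 g1 g2 (Nat.iter n (act2 g1 g2) z)).
  { induction n; cbn; auto. destruct IHn as [[Ha Hb] [Hc Hd]].
    split; [split|split]; cbn [fst snd act2].
    apply mob_inH; auto. apply mob_inH; auto.
    apply AX_mob; auto. apply AX_mob; auto. }
  assert (Hconv : forall w, P2 g1 g2 w ->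
     2 * F q w < F q (act2 g1 g2 w) + F q (act2 (minv g1) (minv g2) w)).
  { intros w [[Ha Hb] [Hc Hd]]. destruct Hq as [Hq1 Hq2]. unfold F, act2; cbn [fst snd].
    pose proof (coord_convex g1 (fst w) (fst q) H1 Hh1 Hc Ha Hq1).
    pose proof (coord_convex g2 (snd w) (snd q) H2 Hh2 Hd Hb Hq2). lra. }
  set (t n := F q (Nat.iter n (act2 g1 g2) z)).
  assert (Hinc : forall n, t n <= t (S n)).
  { induction n. unfold t; cbn. auto.
    assert (Hc := Hconv _ (HP (S n))).
    assert (E : act2 (minv g1) (minv g2) (Nat.iter (S n) (act2 g1 g2) z) = Nat.iter n (act2 g1 g2) z).
    { rewrite Nat.iter_succ. apply act2_inv; auto. apply (HP n). }
    rewrite E in Hc. unfold t in *. rewrite (Nat.iter_succ (S n)). lra. }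
  intro n. change (t 0%nat <= t n). induction n; [lra|]. specialize (Hinc n). lra.
Qed.

Lemma hyp_minv g : hyperbolic g -> hyperbolic (minv g).
Proof. unfold hyperbolic, minv; cbn. rewrite Rplus_comm. auto. Qed.

Lemma AX_minv g w : AX g w -> AX (minv g) w.
Proof. unfold AX, minv; cbn. intros. lra. Qed.

Lemma pow_m1 g1 g2 w : act2_pow g1 g2 (-1) w = act2 (minv g1) (minv g2) w.
Proof. reflexivity. Qed.
Lemma pow_1 g1 g2 w : act2_pow g1 g2 1 w = act2 g1 g2 w.
Proof. reflexivity. Qed.

Theorem mainTheorem4 (g1 g2 : mat) (z : pt2) :
  inSL2 g1 -> inSL2 g2 ->
  hyperbolic g1 -> hyperbolic g2 ->
  on_axis g1 (fst z) -> on_axis g2 (snd z) ->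
  (forall x : pt2,
     ~ (bisector z (act2 g1 g2 z) x /\
        bisector z (act2 (minv g1) (minv g2) z) x)) /\
  (forall q : pt2,
     dirichlet_cyclic g1 g2 z q <->
     (halfspace z (act2 g1 g2 z) q /\
      halfspace z (act2 (minv g1) (minv g2) z) q)).
Proof.
  unfold inSL2. intros H1 H2 Hh1 Hh2 Ha1 Ha2.
  destruct (on_axis_AX _ _ H1 Hh1 Ha1) as [Hz1 Ax1].
  destruct (on_axis_AX _ _ H2 Hh2 Ha2) as [Hz2 Ax2].
  assert (Hz : inH2 z) by (split; auto).
  assert (Hm1 : det (minv g1) = 1) by (rewrite det_minv; auto).
  assert (Hm2 : det (minv g2) = 1) by (rewrite det_minv; auto).
  split.
  - intros x [[Hx E1] [_ E2]].
    apply rho_eq_inv in E1. apply rho_eq_inv in E2.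
    destruct Hx as [Hx1 Hx2].
    pose proof (coord_convex g1 (fst z) (fst x) H1 Hh1 Ax1 Hz1 Hx1).
    pose proof (coord_convex g2 (snd z) (snd x) H2 Hh2 Ax2 Hz2 Hx2).
    unfold F, act2 in E1, E2; cbn [fst snd] in E1, E2. unfold F in E1, E2. lra.
  - intro q. split.
    + intros [Hq Hall]. split; split; auto.
      * assert (W : exists w, inH2 w /\ act2_pow g1 g2 (-1) w <> w).
        { exists z. split; auto. rewrite pow_m1. intro E.
          apply (moves (minv g1) (fst z)); auto. apply hyp_minv; auto. apply AX_minv; auto.
          change (fst (act2 (minv g1) (minv g2) z) = fst z). rewrite E. reflexivity. }
        specialize (Hall _ W). rewrite pow_m1 in Hall.
        rewrite rho_Gi in Hall; auto. rewrite (rho_sym q), (rho_sym q). auto.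
      * assert (W : exists w, inH2 w /\ act2_pow g1 g2 1 w <> w).
        { exists z. split; auto. rewrite pow_1. intro E.
          apply (moves g1 (fst z)); auto.
          change (fst (act2 g1 g2 z) = fst z). rewrite E. reflexivity. }
        specialize (Hall _ W). rewrite pow_1 in Hall.
        rewrite rho_G in Hall; auto. rewrite (rho_sym q), (rho_sym q). auto.
    + intros [[Hq E1] [_ E2]]. split; auto. intros n _. unfold act2_pow.
      destruct (Z.leb 0 n).
      * rewrite (transfer (act2 g1 g2) (act2 (minv g1) (minv g2))); auto.
        -- rewrite (rho_sym z), (rho_sym _ q). apply rho_le.
           apply (side (minv g1) (minv g2)); auto.
           apply hyp_minv; auto. apply hyp_minv; auto.
           split; [|split]; auto; apply AX_minv; auto.
           apply rho_le_inv; auto.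
        -- intros; apply act2_inH2; auto.
        -- intros; apply act2_inH2; auto.
        -- intros; apply rho_G; auto.
      * rewrite (transfer (act2 (minv g1) (minv g2)) (act2 g1 g2)); auto.
        -- rewrite (rho_sym z), (rho_sym _ q). apply rho_le.
           apply (side g1 g2); auto. split; [|split]; auto.
           apply rho_le_inv; auto.
        -- intros; apply act2_inH2; auto.
        -- intros; apply act2_inH2; auto.
        -- intros; apply rho_Gi; auto.
Qed.
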